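(* Let $G$ be a compact Lie group and $(\Omega^\bullet,\nabla)$ a curved differential graded $G$-algebra with $\nabla^2=[\Theta,\cdot]$. For $X\in\mathfrak g$, $t\in\mathbb R$ and $\beta\in\Omega^\bullet$ put $\nabla^{(t,X)}\beta=e^{-t\Theta}\nabla(e^{-tX}\beta)e^{t\Theta}$. Then for all $\beta\in\Omega^0$, $$-\frac{\partial}{\partial t}\big(e^{-t\Theta}(e^{-tX}\beta)e^{t\Theta}\big)=(\nabla+\iota_X)\nabla^{(t,X)}(\beta).$$
   Context: A curved differential graded $G$-algebra: an $\mathbb N$-graded topological algebra $\Omega^\bullet$ with a degree-preserving $G$-action by automorphisms (infinitesimal action $\mathcal L_X$), a $G$-equivariant degree $+1$ derivation $\nabla$, and $G$-equivariant degree $-1$ derivations $\iota_X$ ($X\in\mathfrak g$, linear in $X$) with $\iota_X^2=0$, $\nabla\iota_X+\iota_X\nabla=\mathcal L_X$, such that $\nabla^2=[\Theta,\cdot]$ for some $\Theta\in\Omega^2$ with $\mathcal L_X\Theta=0$ and with $\nabla\Theta+\iota_X\Theta$ central for all $X$. $e^{-tX}\beta$ denotes the action of $\exp(-tX)\in G$ on $\beta$. *)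

(* Defs.v *)
From HB Require Import structures.
From mathcomp Require Import all_boot all_order all_algebra.
From mathcomp Require Import all_classical all_reals all_analysis.

Set Implicit Arguments.
Unset Strict Implicit.
Unset Printing Implicit Defensive.

Import Order.TTheory GRing.Theory Num.Theory.
Import numFieldNormedType.Exports.
Local Open Scope classical_set_scope.
Local Open Scope ring_scope.

(* A real algebra whose underlying vector space is a topological vector space.
   Continuity of the multiplication is imposed separately (topalg_axioms). *)
#[short(type="topAlgType")]
HB.structure Definition TopAlgebra (R : numDomainType) :=
  {A of TopologicalLmodule R A & GRing.Algebra R A}.

Section Defs.
Variable R : realType.
Variable A : topAlgType R.

Definition topalg_axioms : Prop :=
  hausdorff_space A /\ continuous (fun p : A * A => p.1 * p.2).

Definition has_deriv (f : R -> A) (t : R) (v : A) : Prop :=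
  (fun h : R => h^-1 *: (f (t + h) - f t)) @ (0 : R)^' --> v.

Definition exp_series (a : A) : nat -> A := fun k => (k`!%:R)^-1 *: a ^+ k.
Definition expo (a : A) : A :=
  xget 0 (fun l : A => series (exp_series a) @ \oo --> l).

(* N-grading Omega = (+)_k Omega^k, hom k = Omega^k *)
Definition graded_axioms (hom : nat -> set A) : Prop :=
  (forall k, hom k 0 /\ (forall c a b, hom k a -> hom k b -> hom k (c *: a + b)))
  /\ hom 0%N 1
  /\ (forall i j a b, hom i a -> hom j b -> hom (i + j)%N (a * b))
  /\ (forall a, exists n (c : nat -> A),
         (forall k, hom k (c k)) /\ a = \sum_(k < n) c k)
  /\ (forall n (c : nat -> A), (forall k, hom k (c k)) ->
         \sum_(k < n) c k = 0 -> forall k, (k < n)%N -> c k = 0)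
  /\ (forall k, exists p : A -> A, continuous p /\ linear p
         /\ (forall a, hom k a -> p a = a)
         /\ (forall j a, j != k -> hom j a -> p a = 0)).

Definition even_elt (hom : nat -> set A) (a : A) : Prop :=
  exists n (c : nat -> A), (forall k, hom (k.*2) (c k)) /\ a = \sum_(k < n) c k.
Definition odd_elt (hom : nat -> set A) (a : A) : Prop :=
  exists n (c : nat -> A), (forall k, hom (k.*2.+1) (c k)) /\ a = \sum_(k < n) c k.

Definition graded_central (hom : nat -> set A) (z : A) : Prop :=
  exists z0 z1, even_elt hom z0 /\ odd_elt hom z1 /\ z = z0 + z1 /\
    forall j a, hom j a -> z0 * a = a * z0 /\ z1 * a = (-1) ^+ j *: (a * z1).

Definition derivation_p1 (hom : nat -> set A) (D : A -> A) : Prop :=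
  linear D
  /\ (forall k a, hom k a -> hom k.+1 (D a))
  /\ (forall k a b, hom k a -> D (a * b) = D a * b + (-1) ^+ k *: (a * D b)).

(* derivation of degree -1 (Omega^(-1) = 0) *)
Definition derivation_m1 (hom : nat -> set A) (D : A -> A) : Prop :=
  linear D
  /\ (forall a, hom 0%N a -> D a = 0)
  /\ (forall k a, hom k.+1 a -> hom k (D a))
  /\ (forall k a b, hom k a -> D (a * b) = D a * b + (-1) ^+ k *: (a * D b)).

End Defs.

Section GroupDefs.
Variable R : realType.
Variable A : topAlgType R.
Variable G : groupType.
Variable g : lmodType R.

(* expG : Lie algebra -> group, restricted to one-parameter subgroups *)
Definition one_param (expG : g -> G) : Prop :=
  forall X s t, expG ((s + t) *: X) = (expG (s *: X) * expG (t *: X))%g.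

Definition is_adjoint (expG : g -> G) (Ad : G -> g -> g) : Prop :=
  forall x X t, expG (t *: Ad x X) = (x * expG (t *: X) * x^-1)%g.

Definition alg_action (hom : nat -> set A) (act : G -> A -> A) : Prop :=
  (forall a, act 1%g a = a)
  /\ (forall x y a, act (x * y)%g a = act x (act y a))
  /\ (forall x, linear (act x) /\ act x 1 = 1
        /\ (forall a b, act x (a * b) = act x a * act x b)
        /\ continuous (act x)
        /\ (forall k a, hom k a -> hom k (act x a))).

Definition infinitesimal_action (expG : g -> G) (act : G -> A -> A)
    (L : g -> A -> A) : Prop :=
  forall X a, has_deriv (fun s : R => act (expG (s *: X)) a) 0 (L X a).

Definition curved_dgGa (hom : nat -> set A) (act : G -> A -> A)
    (expG : g -> G) (Ad : G -> g -> g) (L : g -> A -> A)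
    (nabla : A -> A) (iota : g -> A -> A) (Theta : A) : Prop :=
  derivation_p1 hom nabla
  /\ (forall x a, act x (nabla a) = nabla (act x a))
  /\ (forall X, derivation_m1 hom (iota X))
  /\ (forall c X Y a, iota (c *: X + Y) a = c *: iota X a + iota Y a)
  /\ (forall x X a, act x (iota X a) = iota (Ad x X) (act x a))
  /\ (forall X a, iota X (iota X a) = 0)
  /\ (forall X a, nabla (iota X a) + iota X (nabla a) = L X a)
  /\ hom 2%N Theta
  (* nabla^2 = [Theta, .]; Theta is even so the graded commutator is plain *)
  /\ (forall a, nabla (nabla a) = Theta * a - a * Theta)
  /\ (forall X, L X Theta = 0)
  /\ (forall X, graded_central hom (nabla Theta + iota X Theta)).

End GroupDefs.

(* Main.v *)
Require Import Defs.
From HB Require Import structures.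
From mathcomp Require Import all_boot all_order all_algebra.
From mathcomp Require Import all_classical all_reals all_analysis.
From mathcomp Require Import zify ring.
Import Order.TTheory GRing.Theory Num.Theory.
Import numFieldNormedType.Exports.
Local Open Scope classical_set_scope.
Local Open Scope ring_scope.

Section Lim.
Variables (R : realType) (A : topAlgType R).
Hypothesis HA : topalg_axioms A.

Lemma tcvgD (T : Type) (F : set_system T) (FF : Filter F) (f g : T -> A) a b :
  f @ F --> a -> g @ F --> b -> (fun x => f x + g x) @ F --> a + b.
Proof.
move=> fa gb; apply: ((@continuous2_cvg T A A A F FF f g (fun x y => x + y))) => //.
exact: (@add_continuous A (a, b)).
Qed.

Lemma tcvgN (T : Type) (F : set_system T) (FF : Filter F) (f : T -> A) a :
  f @ F --> a -> (fun x => - f x) @ F --> - a.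
Proof.
move=> fa; apply: ((@continuous_cvg T A A F FF f (fun x : A => - x))) => //.
exact: opp_continuous.
Qed.

Lemma tcvgM (T : Type) (F : set_system T) (FF : Filter F) (f g : T -> A) a b :
  f @ F --> a -> g @ F --> b -> (fun x => f x * g x) @ F --> a * b.
Proof.
move=> fa gb; apply: ((@continuous2_cvg T A A A F FF f g (fun x y => x * y))) => //.
case: HA => _ Hm; exact: (Hm (a, b)).
Qed.

Lemma tcvgZ (T : Type) (F : set_system T) (FF : Filter F) (s : T -> R) (f : T -> A) (k : R) (a : A) :
  s @ F --> k -> f @ F --> a -> (fun x => s x *: f x) @ F --> k *: a.
Proof.
move=> sk fa; apply: (@continuous2_cvg T R^o A A F FF s f (fun x y => x *: y)) => //.
exact: (@scale_continuous R A (k, a)).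
Qed.

End Lim.
Arguments tcvgD {R A T F FF f g a b}.
Arguments tcvgN {R A T F FF f a}.
Arguments tcvgM {R A} HA {T F FF f g a b}.
Arguments tcvgZ {R A T F FF s f k a}.

Section Der.
Variables (R : realType) (A : topAlgType R).
Hypothesis HA : topalg_axioms A.

Lemma hd_cst (a : A) t : has_deriv (fun _ : R => a) t 0.
Proof.
rewrite /has_deriv (_ : (fun h : R => h^-1 *: (a - a)) = fun _ => 0).
  exact: cvg_cst.
by apply/funext => h; rewrite subrr scaler0.
Qed.

Lemma hd_add (f g : R -> A) t u v : has_deriv f t u -> has_deriv g t v ->
  has_deriv (fun s => f s + g s) t (u + v).
Proof.
move=> fu gv; rewrite /has_deriv.
rewrite (_ : (fun h : R => h^-1 *: (f (t + h) + g (t + h) - (f t + g t))) =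
   fun h => h^-1 *: (f (t + h) - f t) + h^-1 *: (g (t + h) - g t)).
  exact: (tcvgD fu gv).
apply/funext => h; rewrite -scalerDr; congr (_ *: _).
by rewrite opprD addrACA.
Qed.

Lemma hd_opp (f : R -> A) t u : has_deriv f t u ->
  has_deriv (fun s => - f s) t (- u).
Proof.
move=> fu; rewrite /has_deriv.
rewrite (_ : (fun h : R => h^-1 *: (- f (t + h) - - f t)) =
   fun h => - (h^-1 *: (f (t + h) - f t))).
  exact: (tcvgN fu).
by apply/funext => h; rewrite -scalerN opprB opprK addrC.
Qed.

Lemma hd_cont (f : R -> A) t u : has_deriv f t u ->
  (fun h : R => f (t + h)) @ (0 : R)^' --> f t.
Proof.
move=> fu.
have H0 : (fun h : R => h) @ (0 : R)^' --> (0 : R) by exact: nbhs_dnbhs.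
have := tcvgD (cvg_cst (f t)) (tcvgZ H0 fu).
rewrite scale0r addr0 => H.
apply: (@cvg_trans _ ((fun x : R => f t + x *: (x^-1 *: (f (t + x) - f t))) @ (0:R)^')); last exact: H.
apply: near_eq_cvg.
near=> h; have hn0 : h != 0 by near: h; exact: nbhs_dnbhs_neq.
by rewrite scalerA divff // scale1r addrC subrK.
Unshelve. all: by end_near.
Qed.

Lemma hd_mul (f g : R -> A) t u v : has_deriv f t u -> has_deriv g t v ->
  has_deriv (fun s => f s * g s) t (u * g t + f t * v).
Proof.
move=> fu gv; rewrite /has_deriv.
rewrite (_ : (fun h : R => h^-1 *: (f (t + h) * g (t + h) - f t * g t)) =
   fun h => (h^-1 *: (f (t + h) - f t)) * g (t + h) + f t * (h^-1 *: (g (t + h) - g t))).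
  exact: (tcvgD (tcvgM HA fu (@hd_cont g t v gv)) (tcvgM HA (cvg_cst (f t)) gv)).
apply/funext => h; rewrite -scalerAl -scalerAr -scalerDr; congr (_ *: _).
by rewrite mulrBl mulrBr addrA subrK.
Qed.

Lemma hd_real (c : R -> R) (c' : R) (a : A) t :
  (fun h : R => h^-1 * (c (t + h) - c t)) @ (0 : R)^' --> c' ->
  has_deriv (fun s => c s *: a) t (c' *: a).
Proof.
move=> cc; rewrite /has_deriv.
rewrite (_ : (fun h : R => h^-1 *: (c (t + h) *: a - c t *: a)) =
   fun h => (h^-1 * (c (t + h) - c t)) *: a).
  exact: (tcvgZ cc (cvg_cst a)).
by apply/funext => h; rewrite -scalerBl scalerA.
Qed.

Lemma hd_sum (I : Type) (r : seq I) (F : I -> R -> A) (D : I -> A) t :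
  (forall i, has_deriv (F i) t (D i)) ->
  has_deriv (fun s => \sum_(i <- r) F i s) t (\sum_(i <- r) D i).
Proof.
move=> HF; elim: r => [|i r IH].
  rewrite big_nil; under eq_fun do rewrite big_nil; exact: hd_cst.
rewrite big_cons; under eq_fun do rewrite big_cons.
exact (@hd_add _ _ _ _ _ (HF i) IH).
Qed.

End Der.



Lemma real_quot (R : realType) (c : R -> R) t c' : is_derive t (1:R) c c' ->
  (fun h : R => h^-1 * (c (t + h) - c t)) @ (0:R)^' --> c'.
Proof.
case=> d <-; rewrite /derive.
move: d; rewrite /derivable => d.
have E : (fun h : R => h^-1 * (c (t + h) - c t)) =
   (fun h : R => h^-1 *: ((c \o shift t) (h *: 1) - c t)).
  apply/funext => h /=; rewrite /shift. rewrite [h *: _](_ : _ = h); last exact: mulr1. by rewrite (addrC h t).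
rewrite E; exact: d.
Qed.

Lemma pow_quot (R : realType) (k : nat) t :
  (fun h : R => h^-1 * ((t + h) ^+ k - t ^+ k)) @ (0:R)^' --> k%:R * t ^+ k.-1.
Proof.
apply: (@real_quot R (fun s => s ^+ k)).
rewrite -[X in is_derive _ _ _ X]mulr1.
have := @is_deriveX R R id k t 1 1 (is_derive_id _ _).
have -> : (id ^+ k) = (fun s : R => s ^+ k).
  by apply/funext => s; rewrite exprfctE.
move=> H; exact H.
Qed.

Lemma npow_quot (R : realType) (k : nat) t :
  (fun h : R => h^-1 * ((- (t + h)) ^+ k - (- t) ^+ k)) @ (0:R)^' --> - (k%:R * (- t) ^+ k.-1).
Proof.
apply: (@real_quot R (fun s => (- s) ^+ k)).
rewrite -mulrN1.
have := @is_deriveX R R -%R k t 1 (-1) (is_deriveNid _ _).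
have -> : (-%R ^+ k) = (fun s : R => (- s) ^+ k).
  by apply/funext => s; rewrite exprfctE.
move=> H; exact H.
Qed.

Section Lin.
Variables (R : realType) (A : topAlgType R).

Lemma lin0 (p : A -> A) : linear p -> p 0 = 0.
Proof.
move=> Hp; have := Hp 1 0 0; rewrite scale1r addr0 scale1r => /esym E.
by apply: (addrI (p 0)); rewrite addr0 E.
Qed.

Lemma linD (p : A -> A) : linear p -> forall a b, p (a + b) = p a + p b.
Proof. by move=> Hp a b; have := Hp 1 a b; rewrite !scale1r. Qed.

Lemma linZ (p : A -> A) : linear p -> forall c a, p (c *: a) = c *: p a.
Proof.
by move=> Hp c a; have := Hp c a 0; rewrite !addr0 (@lin0 p Hp) addr0.
Qed.

Lemma linN (p : A -> A) : linear p -> forall a, p (- a) = - p a.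
Proof. by move=> Hp a; rewrite -scaleN1r linZ // scaleN1r. Qed.

Lemma linB (p : A -> A) : linear p -> forall a b, p (a - b) = p a - p b.
Proof. by move=> Hp a b; rewrite linD // linN. Qed.

Lemma lin_sum (p : A -> A) (I : Type) (r : seq I) (P : pred I) (F : I -> A) :
  linear p -> p (\sum_(i <- r | P i) F i) = \sum_(i <- r | P i) p (F i).
Proof.
move=> Hp; apply: (big_morph p (@linD p Hp) (@lin0 p Hp)).
Qed.

Variable hom : nat -> set A.
Hypothesis Hg : graded_axioms hom.

Lemma hom0 k : hom k 0.
Proof. by case: Hg => /(_ k) []. Qed.

Lemma homD k a b : hom k a -> hom k b -> hom k (a + b).
Proof. by case: Hg => /(_ k) [_ H] _ ha hb; have := H 1 a b ha hb; rewrite scale1r. Qed.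

Lemma homZ k c a : hom k a -> hom k (c *: a).
Proof. by case: Hg => /(_ k) [H0 H] _ ha; have := H c a 0 ha H0; rewrite addr0. Qed.

Lemma homM i j a b : hom i a -> hom j b -> hom (i + j)%N (a * b).
Proof. by case: Hg => _ [_ [H _]]; exact: H. Qed.

Lemma homX (Th : A) : hom 2 Th -> forall k, hom (k.*2) (Th ^+ k).
Proof.
move=> H2; elim=> [|k IH]; first by rewrite expr0; case: Hg => _ [].
by rewrite exprS doubleS -addn2 addnC; exact: homM.
Qed.

Lemma hom_sum k (I : Type) (r : seq I) (F : I -> A) :
  (forall i, hom k (F i)) -> hom k (\sum_(i <- r) F i).
Proof.
move=> HF; elim: r => [|i r IH]; first by rewrite big_nil; exact: hom0.
by rewrite big_cons; exact: homD.
Qed.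

End Lin.

Section Nil.
Variables (R : realType) (A : topAlgType R) (hom : nat -> set A).
Hypothesis HA : topalg_axioms A.
Hypothesis Hg : graded_axioms hom.

Lemma proj_sumP p k n (F : nat -> A) (deg : nat -> nat) :
  linear p -> (forall j a, j != k -> hom j a -> p a = 0) -> (forall a, hom k a -> p a = a) ->
  (forall i, hom (deg i) (F i)) ->
  p (\sum_(i < n) F i) = \sum_(i < n | deg i == k) F i.
Proof.
move=> Hl Hz Hid HF.
rewrite lin_sum // [RHS]big_mkcond /=; apply: eq_bigr => i _.
case: eqP => [E|/eqP ne]; first by apply: Hid; rewrite -E.
exact: (Hz (deg i)).
Qed.

Lemma theta_nilp (Th : A) : hom 2 Th ->
  (exists l : A, series (exp_series Th) @ \oo --> l) -> exists n, Th ^+ n = 0.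
Proof.
move=> H2 [l Hl].
have := Hg; case=> _ [_ [_ [Hdec [_ Hproj]]]].
have [n [c [Hc El]]] := Hdec l.
have [p [Hpc [Hpl [Hid Hz]]]] := Hproj n.*2.
exists n.
have e_hom i : hom (i.*2) (exp_series Th i) by apply: homZ => //; exact: homX.
have Hpl0 : p l = 0.
  rewrite El (@proj_sumP p n.*2 n c id) //; apply: big1 => i /eqP E.
  by exfalso; have := ltn_ord i; rewrite E -addnn; lia.
have Hlim : (fun j => p (series (exp_series Th) j)) @ \oo --> p l.
  exact: (@continuous_cvg _ _ _ _ _ _ p l (Hpc l) Hl).
have Hcst : (fun j => p (series (exp_series Th) j)) @ \oo --> exp_series Th n.
  apply: cvg_near_cst; near=> j.
  rewrite /series /= big_mkord (@proj_sumP p n.*2 j _ (fun i => i.*2)) //.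
  rewrite (eq_bigl (fun i : 'I_j => (i : nat) == n)); last by move=> i; rewrite -!muln2 eqn_pmul2r.
  rewrite big_ord1_eq ifT //; near: j; exact: nbhs_infty_gt.
have E : exp_series Th n = 0.
  by rewrite -Hpl0; exact: (cvg_unique (proj1 HA) Hcst Hlim).
have := congr1 (fun x => n`!%:R *: x) E; rewrite /exp_series scalerA mulfV ?scale1r ?scaler0 //.
Unshelve. all: by end_near.
Qed.

End Nil.

Section Expo.
Variables (R : realType) (A : topAlgType R).
Hypothesis HA : topalg_axioms A.

Definition Pol (Th : A) (n : nat) (r : R) : A :=
  \sum_(k < n.+1) r ^+ k *: ((k`!%:R)^-1 *: Th ^+ k).

Lemma sum_trunc (F : nat -> A) n j : (forall k, (n <= k)%N -> F k = 0) -> (n <= j)%N ->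
  \sum_(k < j) F k = \sum_(k < n) F k.
Proof.
move=> F0 nj; rewrite [RHS](big_ord_widen j F nj) [RHS]big_mkcond /=.
apply: eq_bigr => i _; case: ifP => // /negbT; rewrite -leqNgt => H.
exact: F0.
Qed.

Lemma nilX (Th : A) n k : Th ^+ n = 0 -> (n <= k)%N -> Th ^+ k = 0.
Proof. by move=> H nk; rewrite -(subnKC nk) exprD H mul0r. Qed.

Lemma expoP (Th : A) n r : Th ^+ n = 0 -> expo (r *: Th) = Pol Th n r.
Proof.
move=> Hn.
have Hs : series (exp_series (r *: Th)) @ \oo --> Pol Th n r.
  apply: cvg_near_cst; near=> j.
  rewrite /series /= big_mkord /Pol.
  have F0 : forall k, (n <= k)%N -> exp_series (r *: Th) k = 0.
    by move=> k nk; rewrite /exp_series exprZn (@nilX Th n k Hn nk) !scaler0.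
  rewrite (@sum_trunc _ n j F0); last by near: j; exact: nbhs_infty_ge.
  have G0 : forall k, (n <= k)%N -> r ^+ k *: ((k`!%:R)^-1 *: Th ^+ k) = 0.
    by move=> k nk; rewrite (@nilX Th n k Hn nk) !scaler0.
  rewrite (@sum_trunc _ n n.+1 G0) //; apply: eq_bigr => k _.
  by rewrite /exp_series exprZn !scalerA mulrC.
rewrite /expo; apply: xget_unique => // y Hy.
exact: (cvg_unique (proj1 HA) Hy Hs).
Unshelve. all: by end_near.
Qed.

End Expo.
Arguments Pol {R A}.
Arguments lin0 {R A p}.
Arguments linD {R A p}.
Arguments linZ {R A p}.
Arguments linN {R A p}.
Arguments linB {R A p}.
Arguments lin_sum {R A p I r P F}.
Arguments homZ {R A hom} Hg {k c a}.
Arguments homD {R A hom} Hg {k a b}.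
Arguments homM {R A hom} Hg {i j a b}.
Arguments homX {R A hom} Hg {Th}.
Arguments nilX {R A Th n k}.
Arguments expoP {R A} HA {Th n} r.

Section PolD.
Variables (R : realType) (A : topAlgType R).
Hypothesis HA : topalg_axioms A.

Lemma fact_inv_shift (i : nat) (x : R) :
  (i.+1%:R * x) * (i.+1`!%:R)^-1 = x * (i`!%:R)^-1 :> R.
Proof.
have h1 : (i.+1%:R : R) != 0 by rewrite pnatr_eq0.
have h2 : (i`!%:R : R) != 0 by rewrite pnatr_eq0 -lt0n fact_gt0.
rewrite factS natrM; field.
by rewrite h2 (addrC 1) natr1 h1.
Qed.

Lemma Pol_shift (Th : A) n (x : R) : Th ^+ n = 0 ->
  \sum_(k < n.+1) (k%:R * x ^+ k.-1) *: ((k`!%:R)^-1 *: Th ^+ k) = Th * Pol Th n x.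
Proof.
move=> Hn; rewrite /Pol big_ord_recl /= mul0r scale0r add0r.
rewrite big_ord_recr /= Hn !scaler0 addr0 mulr_sumr; apply: eq_bigr => i _.
rewrite /bump /= add1n !scalerA fact_inv_shift exprS -!scalerAr.
by rewrite add0n.
Qed.

End PolD.

Section PolD2.
Variables (R : realType) (A : topAlgType R).

Lemma Pol_deriv (Th : A) n t : Th ^+ n = 0 ->
  has_deriv (fun s => Pol Th n s) t (Th * Pol Th n t).
Proof.
move=> Hn; rewrite -Pol_shift // /Pol.
apply: (@hd_sum R A _ (index_enum _) (fun (k : 'I_n.+1) s => s ^+ k *: ((k`!%:R)^-1 *: Th ^+ k))) => k.
apply: hd_real; exact: pow_quot.
Qed.

Lemma Pol_deriv_neg (Th : A) n t : Th ^+ n = 0 ->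
  has_deriv (fun s => Pol Th n (- s)) t (- (Th * Pol Th n (- t))).
Proof.
move=> Hn; rewrite -Pol_shift // /Pol -sumrN.
apply: (@hd_sum R A _ (index_enum _) (fun (k : 'I_n.+1) s => (- s) ^+ k *: ((k`!%:R)^-1 *: Th ^+ k))) => k.
rewrite -scaleNr; apply: hd_real; exact: npow_quot.
Qed.

End PolD2.

Section DLeib.
Variables (R : realType) (A : topAlgType R) (hom : nat -> set A).
Hypothesis Hg : graded_axioms hom.
Variable D : A -> A.
Hypothesis HDl : linear D.
Hypothesis HDL : forall k a b, hom k a -> D (a * b) = D a * b + (-1) ^+ k *: (a * D b).
Variable Th : A.
Hypothesis H2 : hom 2 Th.

Lemma even_sign k : (-1) ^+ (k.*2) = 1 :> R.
Proof. by rewrite -signr_odd odd_double expr0. Qed.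

Lemma Pol_comm (Y : A) n x : Th * Y = Y * Th -> Pol Th n x * Y = Y * Pol Th n x.
Proof.
move=> HY; rewrite /Pol mulr_suml mulr_sumr; apply: eq_bigr => k _.
rewrite -!scalerAl -!scalerAr; congr (_ *: (_ *: _)).
by have := commrX k (esym HY); rewrite /GRing.comm => ->.
Qed.

Lemma D1 : D 1 = 0.
Proof.
have H1 : hom 0 1 by case: Hg => _ [].
have := HDL 0 1 1 H1; rewrite !mul1r mulr1 expr0 scale1r => E.
by apply: (addrI (D 1)); rewrite addr0 -E.
Qed.

Lemma D_Pol_mul x n w : D (Pol Th n x * w) = D (Pol Th n x) * w + Pol Th n x * D w.
Proof.
rewrite /Pol mulr_suml (lin_sum HDl) [D (\sum_(_ < _) _)](lin_sum HDl).
rewrite !mulr_suml -big_split /=; apply: eq_bigr => k _.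
have hk : hom (k.*2) (x ^+ k *: ((k`!%:R)^-1 *: Th ^+ k)).
  by do 2 apply: (homZ Hg); exact: (homX Hg).
by rewrite (HDL _ _ w hk) even_sign scale1r.
Qed.

Hypothesis HZ : Th * D Th = D Th * Th.

Lemma DXS k : D (Th ^+ k.+1) = k.+1%:R *: (D Th * Th ^+ k).
Proof.
elim: k => [|k IH]; first by rewrite expr1 expr0 mulr1 scale1r.
rewrite exprS (HDL _ _ _ H2) IH expr2 mulrN1 opprK scale1r.
rewrite -scalerAr mulrA HZ -mulrA -exprS.
by rewrite -{1}(scale1r (D Th * _)) -scalerDl addrC -natr1 -natr1 -natr1.
Qed.

Lemma D_Pol n x : Th ^+ n = 0 -> D (Pol Th n x) = x *: (D Th * Pol Th n x).
Proof.
move=> Hn; rewrite /Pol (lin_sum HDl) big_ord_recl /= expr0 !(linZ HDl) D1 !scaler0 add0r.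
rewrite big_ord_recr /= Hn !scaler0 ?mulr0 addr0 ?mulr0 ?addr0 mulr_sumr scaler_sumr.
apply: eq_bigr => i _; rewrite !(linZ HDl) /bump /= add1n DXS -!scalerAr !scalerA.
congr (_ *: _).
by rewrite mulrAC [x ^+ i.+1 * _]mulrC (fact_inv_shift R i) exprS mulrA.
Qed.

End DLeib.

Section Central.
Variables (R : realType) (A : topAlgType R) (hom : nat -> set A).
Hypothesis Hg : graded_axioms hom.

Lemma odd_central (Z a b : A) : graded_central hom Z -> hom 3 a -> hom 1 b -> Z = a + b ->
  forall j y, hom j y -> Z * y = (-1) ^+ j *: (y * Z).
Proof.
move=> [z0 [z1 [[n [c [Hc Ez0]]] [[m [d [Hd Ez1]]] [EZ Hcomm]]]]] Ha Hb EZab.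
have := Hg; case=> _ [_ [_ [_ [_ Hproj]]]].
have z00 : z0 = 0.
  rewrite Ez0; apply: big1 => i _.
  have [p [_ [Hpl [Hid Hz]]]] := Hproj (i : nat).*2.
  have P0 : p z0 = c i.
    rewrite Ez0 (@proj_sumP R A hom p (i : nat).*2 n c (fun k => k.*2)) //.
    rewrite (eq_bigl (fun k : 'I_n => (k : nat) == i)); last by move=> k; rewrite -!muln2 eqn_pmul2r.
    by rewrite big_ord1_eq ltn_ord.
  have P1 : p z1 = 0.
    rewrite Ez1 (@proj_sumP R A hom p (i : nat).*2 m d (fun k => k.*2.+1)) //.
    apply: big1 => k /eqP E; exfalso; have := congr1 odd E.
    by rewrite /= !odd_double.
  have PZ : p Z = 0.
    rewrite EZab (linD Hpl) (Hz 3%N) // ?(Hz 1%N) ?addr0 //.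
      by apply/negP => /eqP E; have := congr1 odd E; rewrite odd_double.
    by apply/negP => /eqP E; have := congr1 odd E; rewrite odd_double.
  have : z0 = Z - z1 by rewrite EZ addrK.
  by move=> /(congr1 p); rewrite (linB Hpl) PZ P1 subrr P0.
move=> j y hy; have [_ H] := Hcomm j y hy.
by rewrite EZ z00 !add0r H.
Qed.

End Central.

Section BDer.
Variables (R : realType) (A : topAlgType R) (G : groupType) (g : lmodType R)
  (hom : nat -> set A) (act : G -> A -> A) (expG : g -> G) (L : g -> A -> A)
  (nabla : A -> A) (iota : g -> A -> A).
Hypothesis Hop : one_param expG.
Hypothesis Hact : alg_action hom act.
Hypothesis Hinf : infinitesimal_action expG act L.
Hypothesis Hnl : linear nabla.
Hypothesis Hi0 : forall X a, hom 0 a -> iota X a = 0.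
Hypothesis Hilin : forall c X Y a, iota (c *: X + Y) a = c *: iota X a + iota Y a.
Hypothesis Hcartan : forall X a, nabla (iota X a) + iota X (nabla a) = L X a.

Lemma iotaN X a : iota (- X) a = - iota X a.
Proof.
have E0 : iota 0 a = 0.
  have := Hilin 1 0 0 a; rewrite scale1r addr0 scale1r => E.
  by apply: (addrI (iota 0 a)); rewrite addr0 -E.
by have := Hilin (-1) X 0 a; rewrite addr0 E0 addr0 !scaleN1r.
Qed.

Lemma expG0 (Y : g) : expG (0 *: Y) = 1%g.
Proof.
have := Hop Y 0 0; rewrite addr0 => E.
by apply: (@mulgI _ (expG (0 *: Y))); rewrite mulg1 -E.
Qed.

Lemma b_deriv X t beta : hom 0 beta ->
  has_deriv (fun s => act (expG (- s *: X)) beta) t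
    (- iota X (nabla (act (expG (- t *: X)) beta))).
Proof.
move=> h0.
set bt := act (expG (- t *: X)) beta.
have hbt : hom 0 bt by case: Hact => _ [_ /(_ (expG (- t *: X)))] [_ [_ [_ [_ H]]]]; exact: H.
have E1 h : act (expG (- (t + h) *: X)) beta = act (expG (h *: (- X))) bt.
  rewrite opprD addrC Hop; case: Hact => _ [-> _].
  by rewrite scaleNr scalerN.
have := Hinf (- X) bt; rewrite /has_deriv.
rewrite -Hcartan Hi0 // (lin0 Hnl) add0r iotaN.
apply: cvg_trans; apply: near_eq_cvg; near=> h.
by rewrite E1 add0r expG0; case: Hact => -> _.
Unshelve. all: by end_near.
Qed.

End BDer.

Lemma final_alg (R : realType) (A : topAlgType R) (a q b y w Th Z : A) (t : R) :
 Th * a = a * Th -> Z * a = a * Z -> Z * y = - (y * Z) ->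
 ((-(Th * a)) * b + a * (-w)) * q + (a * b) * (Th * q) =
 - (((-t) *: (Z * a)) * (y * q) + a * ((Th * b - b * Th + w) * q + (-1) *: (y * (t *: (Z * q))))).
Proof.
move=> HTa HZa HZy.
have E1 : ((-t) *: (Z * a)) * (y * q) = t *: (a * (y * (Z * q))).
  rewrite -scalerAl HZa -!mulrA [Z * (y * q)]mulrA HZy mulNr !mulrN scaleNr scalerN opprK.
  by rewrite !mulrA.
have E2 : a * ((Th * b - b * Th + w) * q + (-1) *: (y * (t *: (Z * q)))) =
   a * ((Th * b - b * Th + w) * q) - t *: (a * (y * (Z * q))).
  by rewrite mulrDr scaleN1r mulrN -!scalerAr.
rewrite E1 E2 [t *: _ + _]addrC subrK.
rewrite !mulrDl !mulrDr ?mulrBl ?mulrBr !mulNr !mulrN !mulrA HTa.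
by rewrite mulNr !opprD opprK addrAC.
Qed.

Theorem lemma3p7 (R : realType) (A : topAlgType R) (G : groupType)
  (g : lmodType R) (hom : nat -> set A) (act : G -> A -> A)
  (expG : g -> G) (Ad : G -> g -> g) (L : g -> A -> A)
  (nabla : A -> A) (iota : g -> A -> A) (Theta : A) :
  topalg_axioms A ->
  graded_axioms hom ->
  one_param expG ->
  is_adjoint expG Ad ->
  alg_action hom act ->
  infinitesimal_action expG act L ->
  curved_dgGa hom act expG Ad L nabla iota Theta ->
  (* the exponentials e^{t Theta} are defined (the series converge) *)
  (forall t : R, exists l : A, series (exp_series (t *: Theta)) @ \oo --> l) ->
  forall (X : g) (t : R) (beta : A), hom 0%N beta ->
  let nabla_tX := fun b : A =>
    expo (- t *: Theta) * nabla (act (expG (- t *: X)) b) * expo (t *: Theta) in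
  has_deriv
    (fun s : R => expo (- s *: Theta) * act (expG (- s *: X)) beta * expo (s *: Theta))
    t
    (- (nabla (nabla_tX beta) + iota X (nabla_tX beta))).
Proof.
move=> HA Hg Hop Had Hact Hinf Hcurv Hexp X t beta h0 nabla_tX.
case: Hcurv => [[Hnl [Hndeg Hnleib]] [_ [Hm1 [Hilin [_ [_ [Hcartan [H2 [Hsq [_ Hcen]]]]]]]]]].
have [n Hn] : exists n, Theta ^+ n = 0.
  apply: (@theta_nilp R A hom HA Hg Theta H2).
  by have [l Hl] := Hexp 1; exists l; rewrite scale1r in Hl.
have Hex r : expo (r *: Theta) = Pol Theta n r := expoP HA r Hn.
have -> : (fun s => expo (- s *: Theta) * act (expG (- s *: X)) beta * expo (s *: Theta)) =
   (fun s => Pol Theta n (- s) * act (expG (- s *: X)) beta * Pol Theta n s).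
  by apply/funext => s; rewrite !Hex.
rewrite /nabla_tX !Hex.
have [HIl [HI0 [HIdeg HIleib]]] := Hm1 X.
pose D := fun a => nabla a + iota X a.
have HDl : linear D.
  move=> c u v; rewrite /D Hnl HIl /=.
  by rewrite scalerDr addrACA.
have HDL : forall k a b, hom k a -> D (a * b) = D a * b + (-1) ^+ k *: (a * D b).
  move=> k a b ha; rewrite /D (Hnleib k a b ha) (HIleib k a b ha).
  by rewrite mulrDl mulrDr scalerDr addrACA.
have hZ3 : hom 3 (nabla Theta) by exact: (Hndeg 2%N Theta H2).
have hZ1 : hom 1 (iota X Theta) by exact: (HIdeg 1%N Theta H2).
have Hodd := @odd_central R A hom Hg (D Theta) _ _ (Hcen X) hZ3 hZ1 erefl.
have HZ : Theta * D Theta = D Theta * Theta.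
  by have := Hodd 2%N Theta H2; rewrite expr2 mulrN1 opprK scale1r.
set bt := act (expG (- t *: X)) beta.
have hbt : hom 0 bt by case: Hact => _ [_ /(_ (expG (- t *: X)))] [_ [_ [_ [_ H]]]]; exact: H.
have hy : hom 1 (nabla bt) by exact: (Hndeg 0%N bt hbt).
have Hi0 : forall Y a, hom 0 a -> iota Y a = 0 by move=> Y a ha; have [_ [H _]] := Hm1 Y; exact: H.
have Hd := @hd_mul _ _ HA _ _ _ _ _ (@hd_mul _ _ HA _ _ _ _ _ (@Pol_deriv_neg _ _ Theta n t Hn)
   (@b_deriv R A G g hom act expG L nabla iota Hop Hact Hinf Hnl Hi0 Hilin Hcartan X t beta h0))
   (@Pol_deriv _ _ Theta n t Hn).
rewrite -/bt in Hd.
set a := Pol Theta n (- t) in Hd *.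
set q := Pol Theta n t in Hd *.
suff -> : - (nabla (a * nabla bt * q) + iota X (a * nabla bt * q)) =
  (- (Theta * a) * bt + a * - iota X (nabla bt)) * q + a * bt * (Theta * q) by exact: Hd.
rewrite -[nabla _ + iota X _]/(D _) -mulrA.
rewrite (@D_Pol_mul R A hom Hg D HDl HDL Theta H2 (-t) n).
rewrite (@D_Pol R A hom Hg D HDl HDL Theta H2 HZ n (-t) Hn).
rewrite (HDL 1%N _ _ hy) expr1.
rewrite (@D_Pol R A hom Hg D HDl HDL Theta H2 HZ n t Hn).
have Dy : D (nabla bt) = Theta * bt - bt * Theta + iota X (nabla bt) by rewrite /D Hsq.
rewrite Dy; symmetry; apply: final_alg.
- by rewrite (@Pol_comm R A Theta Theta).
- by rewrite (@Pol_comm R A Theta (D Theta)).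
- by rewrite (Hodd 1%N _ hy) expr1 scaleN1r.
Qed.
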